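(* CGTDS$^F$ reduces (via a computable many-one reduction) to CGTDS.
   Context: An instance of CGTDS consists of a rational discount factor $0<\lambda<1$, a rational target $t$, rational weights $a_1,\dots,a_k$, and an $\omega$-regular expression $e$ over $\{a_1,\dots,a_k\}$; it asks whether there is an infinite $w\in\{a_1,\dots,a_k\}^\omega$ in the language of $e$ with $\sum_{i=0}^\infty w(i)\lambda^i=t$. An instance of CGTDS$^F$ has the same data except that $e$ is a regular expression, and it asks whether there is a finite $w=w(0)\cdots w(n-1)\in\{a_1,\dots,a_k\}^*$ in the language of $e$ with $\sum_{i=0}^{n-1} w(i)\lambda^i=t$. *)

(* Defs.v *)
From HB Require Import structures.
From mathcomp Require Import all_boot all_order all_algebra.
Set Implicit Arguments. Unset Strict Implicit. Unset Printing Implicit Defensive.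
Import Order.TTheory GRing.Theory Num.Theory.
Local Open Scope ring_scope.

(* Letters of words are the weights themselves (rationals). *)

Inductive regex : Type :=
  | REmpty : regex
  | REps : regex
  | RAtom : rat -> regex
  | RCat : regex -> regex -> regex
  | RAlt : regex -> regex -> regex
  | RStar : regex -> regex.

Fixpoint rlang (e : regex) (w : seq rat) : Prop :=
  match e with
  | REmpty => False
  | REps => w = [::]
  | RAtom a => w = [:: a]
  | RCat e1 e2 => exists u v, w = u ++ v /\ rlang e1 u /\ rlang e2 v
  | RAlt e1 e2 => rlang e1 w \/ rlang e2 w
  | RStar e1 => exists ws : seq (seq rat),
      w = flatten ws /\ (forall u, u \in ws -> rlang e1 u)
  end.

Fixpoint ratoms (e : regex) : seq rat :=
  match e with
  | REmpty | REps => [::]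
  | RAtom a => [:: a]
  | RCat e1 e2 | RAlt e1 e2 => ratoms e1 ++ ratoms e2
  | RStar e1 => ratoms e1
  end.

Inductive oregex : Type :=
  | OCat : regex -> oregex -> oregex
  | OAlt : oregex -> oregex -> oregex
  | OOmega : regex -> oregex.

Fixpoint olang (e : oregex) (w : nat -> rat) : Prop :=
  match e with
  | OCat r o => exists u, rlang r u /\
      (forall i, (i < size u)%N -> w i = nth 0 u i) /\
      olang o (fun i => w (i + size u)%N)
  | OAlt o1 o2 => olang o1 w \/ olang o2 w
  | OOmega r => (* infinite concatenation of nonempty words of L(r) *)
      exists p : nat -> nat, p 0%N = 0%N /\ (forall n, (p n < p n.+1)%N) /\
      forall n, rlang r [seq w i | i <- index_iota (p n) (p n.+1)]
  end.

Fixpoint oatoms (e : oregex) : seq rat :=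
  match e with
  | OCat r o => ratoms r ++ oatoms o
  | OAlt o1 o2 => oatoms o1 ++ oatoms o2
  | OOmega r => ratoms r
  end.

Record instF := InstF {
  fl_lam : rat; fl_t : rat; fl_weights : seq rat; fl_expr : regex }.
Record inst := Inst {
  in_lam : rat; in_t : rat; in_weights : seq rat; in_expr : oregex }.

Definition validF (x : instF) : Prop :=
  0 < fl_lam x < 1 /\ {subset ratoms (fl_expr x) <= fl_weights x}.
Definition valid (x : inst) : Prop :=
  0 < in_lam x < 1 /\ {subset oatoms (in_expr x) <= in_weights x}.

Definition CGTDSF (x : instF) : Prop :=
  exists w : seq rat, all (fun a => a \in fl_weights x) w /\
    rlang (fl_expr x) w /\
    \sum_(i < size w) nth 0 w i * fl_lam x ^+ i = fl_t x.

Definition conv_to (s : nat -> rat) (l : rat) : Prop :=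
  forall eps : rat, 0 < eps -> exists N, forall n, (N <= n)%N -> `|s n - l| < eps.

Definition CGTDS (x : inst) : Prop :=
  exists w : nat -> rat, (forall i, w i \in in_weights x) /\
    olang (in_expr x) w /\
    conv_to (fun n => \sum_(i < n) w i * in_lam x ^+ i) (in_t x).

(** The (evidently computable) reduction: add the weight 0 and append 0^omega. *)
Definition reduction (x : instF) : inst :=
  Inst (fl_lam x) (fl_t x) (rcons (fl_weights x) 0) (OCat (fl_expr x) (OOmega (RAtom 0))).

(* Main.v *)
Require Import Defs.
From HB Require Import structures.
From mathcomp Require Import all_boot all_order all_algebra.
From mathcomp Require Import zify.
Set Implicit Arguments. Unset Strict Implicit. Unset Printing Implicit Defensive.
Import Order.TTheory GRing.Theory Num.Theory.
Local Open Scope ring_scope.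

Lemma rlang_atoms e u : rlang e u -> {subset u <= ratoms e}.
Proof.
elim: e u => [||a|e1 IH1 e2 IH2|e1 IH1 e2 IH2|e1 IH1] u /=.
- by [].
- by move=> h x; rewrite h.
- by move=> h x; rewrite h.
- move=> [u1 [u2 [-> [h1 h2]]]] x; rewrite !mem_cat => /orP [hx|hx].
  + by rewrite (IH1 _ h1 x hx).
  + by rewrite (IH2 _ h2 x hx) orbT.
- move=> [h|h] x hx; rewrite mem_cat.
  + by rewrite (IH1 _ h x hx).
  + by rewrite (IH2 _ h x hx) orbT.
- move=> [ws [-> hw]] x /flattenP [v vin xv].
  exact: (IH1 _ (hw _ vin) x xv).
Qed.

Lemma sum_trunc (F : nat -> rat) m n : (m <= n)%N ->
  (forall i, (m <= i)%N -> F i = 0) ->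
  \sum_(i < n) F i = \sum_(i < m) F i.
Proof.
move=> le HF; rewrite (big_ord_widen _ F le) [RHS]big_mkcond.
apply: eq_bigr => i _; case: ifP => // /negbT; rewrite -leqNgt => h.
by rewrite HF.
Qed.

Lemma conv_const (s : nat -> rat) m S t : conv_to s t ->
  (forall n, (m <= n)%N -> s n = S) -> S = t.
Proof.
move=> hc hs; apply/eqP; apply/negPn/negP => hne.
have hp : 0 < `|S - t| by rewrite normr_gt0 subr_eq0.
have [N hN] := hc _ hp.
have := hN (maxn N m) (leq_maxl _ _).
by rewrite hs ?leq_maxr // ltxx.
Qed.

Theorem theorem6 :
  forall x : instF, validF x ->
    valid (reduction x) /\ (CGTDSF x <-> CGTDS (reduction x)).
Proof.
move=> [lam t ws e] [hlam hsub] /=.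
split.
  split => //= a; rewrite mem_cat mem_rcons in_cons => /orP [/hsub h|h].
    by rewrite h orbT.
  by move: h; rewrite mem_seq1 => ->.
split.
- move=> [w [hall [hw hsum]]] /=.
  exists (fun i => nth 0 w i); split; last split.
  + move=> i /=; rewrite mem_rcons in_cons.
    case: (ltnP i (size w)) => hi.
      by rewrite (allP hall) ?orbT // mem_nth.
    by rewrite nth_default.
  + exists w; split => //; split => //=.
    exists (fun n => n); split => //; split => // n.
    by rewrite /index_iota subSnn /= nth_default // leq_addl.
  + move=> eps heps; exists (size w) => n hn /=.
    rewrite (@sum_trunc (fun i => nth 0 w i * lam ^+ i) (size w)) //; last first.
      by move=> i hi; rewrite nth_default // mul0r.
    by rewrite hsum subrr normr0.
- move=> [W [hW [[u [hu [hWu [p [p0 [hp hblk]]]]]] hconv]]] /=.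
  have hpn : forall n, p n = n.
    elim=> [//|n IH].
    have := congr1 size (hblk n); rewrite size_map size_iota /= => e1.
    have := hp n; lia.
  have hz : forall n, W (n + size u)%N = 0.
    move=> n; have := hblk n; rewrite !hpn /index_iota subSnn /=.
    by case.
  exists u; split; last split => //.
    apply/allP => a /(rlang_atoms hu) /hsub //.
  apply: (conv_const (m := size u) hconv) => n hn /=.
  rewrite (@sum_trunc (fun i => W i * lam ^+ i) (size u)) //; last first.
    move=> i hi; have -> : i = ((i - size u) + size u)%N by rewrite subnK.
    by rewrite hz mul0r.
  apply: eq_bigr => i _; by rewrite hWu.
Qed.
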